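(* Let $S$ be a dense subsemigroup of $((0,\infty),+)$ and let $B\subseteq S$. Then $B$ is central near zero if and only if there exist a dynamical system $(X,\langle T_s\rangle_{s\in S})$, points $x,y\in X$ and a neighbourhood $U$ of $y$ such that $x$ and $y$ are proximal near zero, $y$ is uniformly recurrent near zero, and $B=\{s\in S: T_s(x)\in U\}$.
   Context: ''Dense'' means dense in the usual topology of $(0,\infty)$. $\beta S$ is the Stone–Čech compactification of the discrete set $S$ (ultrafilters on $S$), with $+$ extended so that $(\beta S,+)$ is a compact right topological semigroup: $A\in p+q$ iff $\{x\in S:-x+A\in q\}\in p$, where $-x+A=\{y\in S:x+y\in A\}$. $O^{+}(S)=\{p\in\beta S: S\cap(0,\epsilon)\in p\text{ for every }\epsilon>0\}$, a compact right topological subsemigroup of $\beta S$; $K(O^{+}(S))$ is its smallest two-sided ideal. A set $B\subseteq S$ is central near zero iff there is an idempotent $p\in K(O^{+}(S))$ with $B\in p$. A dynamical system $(X,\langle T_s\rangle_{s\in S})$ consists of a compact Hausdorff space $X$ and continuous maps $T_s:X\to X$ with $T_s\circ T_t=T_{s+t}$. A subset $B\subseteq S$ is syndetic near zero iff for every $\epsilon>0$ there exist a finite nonempty $F\subseteq (0,\epsilon)\cap S$ and $\delta>0$ with $S\cap(0,\delta)\subseteq\bigcup_{t\in F}(-t+B)$. A point $y$ is uniformly recurrent near zero iff for each neighbourhood $W$ of $y$, $\{s\in S:T_s(y)\in W\}$ is syndetic near zero. Points $x,y$ are proximal near zero iff for every neighbourhood $U$ of the diagonal in $X\times X$ and every $\epsilon>0$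 there is $s\in S\cap(0,\epsilon)$ with $(T_s(x),T_s(y))\in U$. *)

(* Defs.v *)
From Stdlib Require Import Reals List.
Open Scope R_scope.

Definition dense_subsemigroup (S : R -> Prop) : Prop :=
  (forall s, S s -> 0 < s) /\
  (forall s t, S s -> S t -> S (s + t)) /\
  (forall a b, 0 <= a -> a < b -> exists s, S s /\ a < s /\ s < b).

(* ---------- beta S : ultrafilters on S ----------
   A point of beta S is a family p of subsets of S (subsets given as
   predicates on R contained in S). *)
Definition ultrafilter (S : R -> Prop) (p : (R -> Prop) -> Prop) : Prop :=
  (forall A, p A -> forall z, A z -> S z) /\
  p S /\
  ~ p (fun _ => False) /\
  (forall A C, p A -> p C -> p (fun z => A z /\ C z)) /\
  (forall A C, p A -> (forall z, C z -> S z) -> (forall z, A z -> C z) -> p C) /\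
  (forall A, (forall z, A z -> S z) -> p A \/ p (fun z => S z /\ ~ A z)).

Definition shift (S : R -> Prop) (x : R) (A : R -> Prop) : R -> Prop :=
  fun y => S y /\ A (x + y).

Definition bplus (S : R -> Prop) (p q : (R -> Prop) -> Prop) : (R -> Prop) -> Prop :=
  fun A => (forall z, A z -> S z) /\ p (fun x => S x /\ q (shift S x A)).

Definition ueq (p q : (R -> Prop) -> Prop) : Prop := forall A, p A <-> q A.

Definition in_Oplus (S : R -> Prop) (p : (R -> Prop) -> Prop) : Prop :=
  ultrafilter S p /\
  forall eps, 0 < eps -> p (fun x => S x /\ 0 < x /\ x < eps).

Definition two_sided_ideal (S : R -> Prop)
    (I : ((R -> Prop) -> Prop) -> Prop) : Prop :=
  (forall q, I q -> in_Oplus S q) /\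
  (exists q, I q) /\
  (forall q r, in_Oplus S q -> I r -> I (bplus S q r) /\ I (bplus S r q)).

(* K(O^+(S)), the smallest two-sided ideal = intersection of all ideals *)
Definition in_K (S : R -> Prop) (p : (R -> Prop) -> Prop) : Prop :=
  in_Oplus S p /\ forall I, two_sided_ideal S I -> I p.

Definition central_near_zero (S B : R -> Prop) : Prop :=
  exists p, in_K S p /\ ueq (bplus S p p) p /\ p B.

Definition topology (X : Type) (op : (X -> Prop) -> Prop) : Prop :=
  op (fun _ => True) /\
  op (fun _ => False) /\
  (forall U V, op U -> op V -> op (fun x => U x /\ V x)) /\
  (forall F : (X -> Prop) -> Prop, (forall U, F U -> op U) ->
      op (fun x => exists U, F U /\ U x)).

Definition compact (X : Type) (op : (X -> Prop) -> Prop) : Prop :=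
  forall F : (X -> Prop) -> Prop, (forall U, F U -> op U) ->
    (forall x, exists U, F U /\ U x) ->
    exists l : list (X -> Prop), (forall U, In U l -> F U) /\
      (forall x, exists U, In U l /\ U x).

Definition hausdorff (X : Type) (op : (X -> Prop) -> Prop) : Prop :=
  forall x y, x <> y -> exists U V, op U /\ op V /\ U x /\ V y /\
    (forall z, ~ (U z /\ V z)).

Definition continuous (X : Type) (op : (X -> Prop) -> Prop) (f : X -> X) : Prop :=
  forall U, op U -> op (fun x => U (f x)).

Definition nbhd (X : Type) (op : (X -> Prop) -> Prop) (y : X) (U : X -> Prop) : Prop :=
  exists V, op V /\ V y /\ forall z, V z -> U z.

Definition prod_open (X : Type) (op : (X -> Prop) -> Prop) (W : X * X -> Prop) : Prop :=
  forall a b, W (a, b) -> exists A C, op A /\ op C /\ A a /\ C b /\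
    forall u v, A u -> C v -> W (u, v).

Definition diag_nbhd (X : Type) (op : (X -> Prop) -> Prop) (U : X * X -> Prop) : Prop :=
  exists W, prod_open X op W /\ (forall x, W (x, x)) /\ forall z, W z -> U z.

Definition dynamical_system (S : R -> Prop) (X : Type) (op : (X -> Prop) -> Prop)
    (T : R -> X -> X) : Prop :=
  topology X op /\ compact X op /\ hausdorff X op /\
  (forall s, S s -> continuous X op (T s)) /\
  (forall s t, S s -> S t -> forall x, T s (T t x) = T (s + t) x).

Definition syndetic_near_zero (S B : R -> Prop) : Prop :=
  forall eps, 0 < eps -> exists (F : list R) (delta : R),
    F <> nil /\ (forall t, In t F -> S t /\ 0 < t /\ t < eps) /\ 0 < delta /\
    forall s, S s -> 0 < s -> s < delta ->
      exists t, In t F /\ shift S t B s.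

Definition unif_rec_near_zero (S : R -> Prop) (X : Type) (op : (X -> Prop) -> Prop)
    (T : R -> X -> X) (y : X) : Prop :=
  forall W, nbhd X op y W -> syndetic_near_zero S (fun s => S s /\ W (T s y)).

Definition proximal_near_zero (S : R -> Prop) (X : Type) (op : (X -> Prop) -> Prop)
    (T : R -> X -> X) (x y : X) : Prop :=
  forall U, diag_nbhd X op U -> forall eps, 0 < eps ->
    exists s, S s /\ 0 < s /\ s < eps /\ U (T s x, T s y).

(* Main.v *)
From mathcomp Require boolp classical_sets.
From Stdlib Require Import Reals List Classical FunctionalExtensionality PropExtensionality ClassicalEpsilon Lra.
Require Import Defs.
Open Scope R_scope.
Lemma asb_i (P : Prop) : P -> boolp.asbool P = true.
Proof. intro h. apply (Bool.reflect_iff _ _ (boolp.asboolP P)). exact h. Qed.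
Lemma asb_e (P : Prop) : boolp.asbool P = true -> P.
Proof. intro h. apply (Bool.reflect_iff _ _ (boolp.asboolP P)). exact h. Qed.
Lemma zorn_pre (T : Type) (t0 : T) (Rl : T -> T -> Prop) :
  (forall t, Rl t t) -> (forall r s t, Rl r s -> Rl s t -> Rl r t) ->
  (forall A : T -> Prop, (forall s t, A s -> A t -> Rl s t \/ Rl t s) ->
     exists t, forall s, A s -> Rl s t) ->
  exists t, forall s, Rl t s -> Rl s t.
Proof.
intros H1 H2 H3.
destruct (@classical_sets.ZL_preorder T t0 (fun a b => boolp.asbool (Rl a b))) as [t Ht].
- intro t; apply asb_i; auto.
- intros r s t a b; apply asb_i. apply (H2 r s t); apply asb_e; assumption.
- intros A HA. destruct (H3 A) as [t Ht].
  + intros s t As At. destruct (HA s t As At) as [h|h]; [left|right]; apply asb_e; exact h.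
  + exists t. intros s As. apply asb_i. auto.
- exists t. intros s Hs. specialize (Ht s). 
  apply asb_e. apply Ht. apply asb_i. exact Hs.
Qed.

Section BS.
Variable S : R -> Prop.
Definition UF := (R -> Prop) -> Prop.
Definition subS (A : R -> Prop) := forall z, A z -> S z.
Definition cmp (A : R -> Prop) : R -> Prop := fun z => S z /\ ~ A z.

Lemma uf_sub p A : ultrafilter S p -> p A -> subS A.
Proof. intros [h _] H; exact (h A H). Qed.

Lemma uf_S p : ultrafilter S p -> p S.
Proof. intros (_&h&_); exact h. Qed.

Lemma uf_up p A C : ultrafilter S p -> p A -> (forall z, S z -> A z -> C z) -> subS C -> p C.
Proof.
intros Hp HA HAC HC. destruct Hp as (h1&h2&h3&h4&h5&h6).
apply (h5 _ C (h4 _ _ HA h2)); auto.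
intros z [a b]; auto.
Qed.

Lemma uf_and p A C : ultrafilter S p -> p A -> p C -> p (fun z => A z /\ C z).
Proof. intros (h1&h2&h3&h4&h5&h6) a c; auto. Qed.

Lemma uf_ne p A : ultrafilter S p -> p A -> exists z, S z /\ A z.
Proof.
intros Hp HA. apply NNPP; intro N.
destruct Hp as (h1&h2&h3&h4&h5&h6) eqn:E. apply h3.
apply (h5 _ _ (h4 _ _ HA h2)).
- intros z [].
- intros z [a b]; apply N; exists z; auto.
Qed.

Lemma uf_cmp p A : ultrafilter S p -> subS A -> ~ p A -> p (cmp A).
Proof. intros (h1&h2&h3&h4&h5&h6) HA N. destruct (h6 A HA); tauto. Qed.

Lemma uf_notboth p A : ultrafilter S p -> p A -> ~ p (cmp A).
Proof.
intros Hp a c. destruct (uf_ne p _ Hp (uf_and p _ _ Hp a c)) as (z&_&h1&_&h2). auto.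
Qed.

Lemma uf_dec p A : ultrafilter S p -> subS A -> p A \/ p (cmp A).
Proof. intros Hp HA. destruct (classic (p A)); auto. right; apply uf_cmp; auto. Qed.

Lemma uf_eq p q : ultrafilter S p -> ultrafilter S q -> (forall A, p A -> q A) -> p = q.
Proof.
intros Hp Hq H. apply functional_extensionality; intro A.
apply propositional_extensionality; split; auto.
intro qA. pose proof (uf_sub q A Hq qA) as sA.
destruct (uf_dec p A Hp sA) as [h|h]; auto.
exfalso. apply (uf_notboth q A Hq qA). auto.
Qed.

Lemma uf_list {I : Type} p (l : list I) (P : I -> R -> Prop) :
  ultrafilter S p -> (forall i, In i l -> subS (P i)) ->
  p (fun z => exists i, In i l /\ P i z) -> exists i, In i l /\ p (P i).
Proof.
intros Hp. induction l as [|a l IH]; intros Hs H.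
- destruct (uf_ne p _ Hp H) as (z&_&i&[]&_).
- destruct (classic (p (P a))) as [h|h].
  + exists a; split; simpl; auto.
  + assert (c := uf_cmp p _ Hp (Hs a (or_introl eq_refl)) h).
    destruct IH as (i&Hi&Hpi).
    * intros i Hi; apply Hs; simpl; auto.
    * apply (uf_up p (fun z => (exists i, In i (a :: l) /\ P i z) /\ cmp (P a) z)); auto.
      -- apply uf_and; auto.
      -- intros z _ [(i&Hi&Hz) [_ Nz]]. simpl in Hi; destruct Hi as [<-|Hi]; [tauto|eauto].
      -- intros z (i&Hi&Hz). apply (Hs i); simpl; auto.
    * exists i; simpl; auto.
Qed.
Hypothesis Hadd : forall s t, S s -> S t -> S (s + t).

Lemma bplus_uf p q : ultrafilter S p -> ultrafilter S q -> ultrafilter S (bplus S p q).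
Proof.
intros Hp Hq. unfold bplus. split; [|split; [|split; [|split; [|split]]]].
- intros A [h _]; exact h.
- split. intros z h; exact h. apply (uf_up p S _ Hp (uf_S p Hp)).
  + intros x Sx _. split; auto. apply (uf_up q S _ Hq (uf_S q Hq)).
    * intros y Sy _; split; auto.
    * intros y [a b]; auto.
  + intros x [a b]; auto.
- intros [_ H]. destruct (uf_ne p _ Hp H) as (x&_&_&H2).
  destruct (uf_ne q _ Hq H2) as (y&_&_&[]).
- intros A C [hA pA] [hC pC]. split. intros z [a _]; auto.
  apply (uf_up p _ _ Hp (uf_and p _ _ Hp pA pC)).
  + intros x Sx [[_ a] [_ c]]. split; auto.
    apply (uf_up q _ _ Hq (uf_and q _ _ Hq a c)).
    * intros y Sy [[_ a1] [_ c1]]. split; auto.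
    * intros y [h _]; auto.
  + intros x [h _]; auto.
- intros A C [hA pA] HC HAC. split; auto.
  apply (uf_up p _ _ Hp pA).
  + intros x Sx [_ a]. split; auto.
    apply (uf_up q _ _ Hq a).
    * intros y Sy [_ a1]; split; auto.
    * intros y [h _]; auto.
  + intros x [h _]; auto.
- intros A HA.
  destruct (uf_dec p (fun x => S x /\ q (shift S x A)) Hp) as [h|h].
  + intros x [a _]; auto.
  + left. split; auto.
  + right. split. intros z [a _]; auto.
    apply (uf_up p _ _ Hp h).
    * intros x Sx [_ N]. split; auto.
      assert (c : q (cmp (shift S x A))).
      { apply uf_cmp; auto. intros y [a _]; auto. }
      apply (uf_up q _ _ Hq c).
      -- intros y Sy [_ N2]. split; auto. split; auto. intro a; apply N2; split; auto.
      -- intros y [a _]; auto.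
    * intros x [a _]; auto.
Qed.

Lemma bplus_assoc p q r : ultrafilter S p -> ultrafilter S q -> ultrafilter S r ->
  bplus S (bplus S p q) r = bplus S p (bplus S q r).
Proof.
intros Hp Hq Hr. apply uf_eq.
- repeat apply bplus_uf; auto.
- repeat apply bplus_uf; auto.
- intros A [hA [_ H]]. split; auto.
  apply (uf_up p _ _ Hp H).
  + intros y Sy [_ H2]. split; auto. split.
    * intros z [a _]; auto.
    * apply (uf_up q _ _ Hq H2).
      -- intros x Sx [_ [_ H3]]. split; auto.
         apply (uf_up r _ _ Hr H3).
         ++ intros z Sz [_ a]. split; auto. split; auto. rewrite <- Rplus_assoc; auto.
         ++ intros z [a _]; auto.
      -- intros x [a _]; auto.
  + intros x [a _]; auto.
Qed.

Lemma oplus_bplus p q : in_Oplus S p -> in_Oplus S q -> in_Oplus S (bplus S p q).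
Proof.
intros [Hp Ep] [Hq Eq]. split. apply bplus_uf; auto.
intros eps He. split. intros z [a _]; auto.
apply (uf_up p _ _ Hp (Ep (eps/2) ltac:(lra))).
- intros x Sx (_&x1&x2). split; auto.
  apply (uf_up q _ _ Hq (Eq (eps/2) ltac:(lra))).
  + intros y Sy (_&y1&y2). split; auto. split; auto. split; lra.
  + intros y [a _]; auto.
- intros x [a _]; auto.
Qed.

Definition FIP (G : UF) : Prop := forall l : list (R -> Prop),
  (forall A, In A l -> G A) -> exists z, S z /\ forall A, In A l -> A z.

Lemma fip_add (M : UF) (C : R -> Prop) :
  (forall l, (forall A, In A l -> M A) -> exists z, S z /\ C z /\ forall A, In A l -> A z) ->
  FIP (fun A => M A \/ A = C).
Proof.
intros H l Hl.
assert (K : exists l', (forall A, In A l' -> M A) /\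
   forall z, C z -> (forall A, In A l' -> A z) -> forall A, In A l -> A z).
{ clear H. induction l as [|a l IH].
  - exists nil. split. intros A []. intros z _ _ A [].
  - destruct IH as (l'&H1&H2). intros A HA; apply Hl; simpl; auto.
    destruct (Hl a (or_introl eq_refl)) as [Ma|Ea].
    + exists (a :: l'). split.
      * intros A [<-|HA]; auto.
      * intros z Cz Hz A [<-|HA].
        -- apply Hz; simpl; auto.
        -- apply (H2 z Cz); auto. intros B HB; apply Hz; simpl; auto.
    + exists l'. split; auto. intros z Cz Hz A [<-|HA].
      * rewrite Ea; exact Cz.
      * apply (H2 z Cz Hz); auto. }
destruct K as (l'&H1&H2). destruct (H l' H1) as (z&Sz&Cz&Hz).
exists z; split; [exact Sz | exact (H2 z Cz Hz)].
Qed.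

Lemma uf_lemma (G : UF) : (forall A, G A -> subS A) -> FIP G ->
  exists p, ultrafilter S p /\ forall A, G A -> p A.
Proof.
intros HG FG.
set (P := fun F : UF => (forall A, F A -> subS A) /\ FIP F /\ (forall A, G A -> F A)).
destruct (zorn_pre {F : UF | P F} (exist _ G (conj HG (conj FG (fun A h => h))))
  (fun a b => forall A, proj1_sig a A -> proj1_sig b A)) as [[M [M1 [M2 M3]]] HM].
- intros t A h; exact h.
- intros r s t h1 h2 A h; auto.
- intros Ch HCh.
  set (U := fun A => G A \/ exists a, Ch a /\ proj1_sig a A).
  assert (PU : P U).
  { split; [|split].
    - intros A [h|(a&_&h)]. apply HG; auto. exact (proj1 (proj2_sig a) A h).
    - intros l Hl.
      assert (K : exists F0, (F0 = G \/ exists a, Ch a /\ F0 = proj1_sig a) /\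
                   forall A, In A l -> F0 A).
      { induction l as [|A l IH].
        - exists G. split; auto. intros A [].
        - destruct IH as (F0&PF0&HF0). intros B HB; apply Hl; simpl; auto.
          destruct (Hl A (or_introl eq_refl)) as [GA|(a&Cha&aA)].
          + exists F0. split; auto. intros B [<-|HB]; auto.
            destruct PF0 as [->|(b&_&->)]; auto. exact (proj2 (proj2 (proj2_sig b)) _ GA).
          + destruct PF0 as [->|(b&Chb&->)].
            * exists (proj1_sig a). split; eauto. intros B [<-|HB]; auto.
              exact (proj2 (proj2 (proj2_sig a)) _ (HF0 B HB)).
            * destruct (HCh a b Cha Chb) as [ab|ba].
              -- exists (proj1_sig b). split; eauto. intros B [<-|HB]; auto.
              -- exists (proj1_sig a). split; eauto. intros B [<-|HB]; auto. }
      destruct K as (F0&PF0&HF0).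
      destruct PF0 as [->|(b&_&->)].
      + apply FG; auto.
      + apply (proj1 (proj2 (proj2_sig b))); auto.
    - intros A h; left; auto. }
  exists (exist _ U PU). intros s Chs A h. simpl. right. eauto.
- assert (add : forall C, subS C ->
     (forall l, (forall A, In A l -> M A) -> exists z, S z /\ C z /\ forall A, In A l -> A z) ->
     M C).
  { intros C SC HC.
    assert (PC : P (fun A => M A \/ A = C)).
    { split; [|split].
      - intros A [h| ->]; auto.
      - apply fip_add; auto.
      - intros A h; left; auto. }
    exact (HM (exist _ _ PC) (fun A h => or_introl h) C (or_intror eq_refl)). }
  exists M. split.
  + split; [|split; [|split; [|split; [|split]]]].
    * exact M1.
    * apply add. intros z h; exact h.
      intros l Hl. destruct (M2 l Hl) as (z&Sz&Hz). eauto.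
    * intro h. destruct (M2 (cons (fun _ => False) nil)) as (z&_&Hz).
      intros A [<-|[]]; auto. exact (Hz _ (or_introl eq_refl)).
    * intros A C hA hC. apply add.
      intros z [a _]; apply (M1 A hA); auto.
      intros l Hl. destruct (M2 (A :: C :: l)) as (z&Sz&Hz).
      intros B [<-|[<-|HB]]; auto.
      exists z. split; auto. split. split; apply Hz; simpl; auto.
      intros B HB; apply Hz; simpl; auto.
    * intros A C hA SC AC. apply add; auto.
      intros l Hl. destruct (M2 (A :: l)) as (z&Sz&Hz).
      intros B [<-|HB]; auto.
      exists z. split; auto. split. apply AC; apply Hz; simpl; auto.
      intros B HB; apply Hz; simpl; auto.
    * intros A SA. apply NNPP; intro N.
      assert (N1 : ~ M A) by tauto. assert (N2 : ~ M (cmp A)) by tauto.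
      assert (E1 : exists l1, (forall B, In B l1 -> M B) /\
                  ~ exists z, S z /\ A z /\ forall B, In B l1 -> B z).
      { apply NNPP; intro N3. apply N1. apply add; auto.
        intros l Hl. apply NNPP; intro N4. apply N3. eauto. }
      assert (E2 : exists l2, (forall B, In B l2 -> M B) /\
                  ~ exists z, S z /\ cmp A z /\ forall B, In B l2 -> B z).
      { apply NNPP; intro N3. apply N2. apply add; auto.
        intros z [a _]; auto.
        intros l Hl. apply NNPP; intro N4. apply N3. eauto. }
      destruct E1 as (l1&H1&H1'). destruct E2 as (l2&H2&H2').
      destruct (M2 (l1 ++ l2)) as (z&Sz&Hz).
      intros B HB. apply in_app_or in HB. destruct HB; auto.
      destruct (classic (A z)) as [a|a].
      -- apply H1'. exists z. split; auto. split; auto. intros B HB; apply Hz, in_or_app; auto.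
      -- apply H2'. exists z. split; auto. split. split; auto. intros B HB; apply Hz, in_or_app; auto.
  + exact M3.
Qed.

Lemma fip_directed (G : UF) : (exists E, G E) -> (forall E, G E -> exists z, S z /\ E z) ->
  (forall E1 E2, G E1 -> G E2 -> exists E3, G E3 /\ forall z, E3 z -> E1 z /\ E2 z) -> FIP G.
Proof.
intros [E0 H0] Hne Hdir l Hl.
assert (K : exists E, G E /\ forall z, E z -> forall A, In A l -> A z).
{ induction l as [|A l IH].
  - exists E0; split; auto. intros z _ A [].
  - destruct IH as (E&GE&HE). intros B HB; apply Hl; simpl; auto.
    destruct (Hdir A E (Hl A (or_introl eq_refl)) GE) as (E3&G3&H3).
    exists E3. split; auto. intros z Ez B [<-|HB]. apply H3; auto.
    apply (HE z); auto. apply H3; auto. }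
destruct K as (E&GE&HE). destruct (Hne E GE) as (z&Sz&Ez). exists z; split; [exact Sz | exact (HE z Ez)].
Qed.

Definition closedb (C : UF -> Prop) : Prop :=
  (forall p, C p -> ultrafilter S p) /\
  forall p, ultrafilter S p -> ~ C p -> exists A, p A /\ forall q, ultrafilter S q -> q A -> ~ C q.

Lemma closed_char C p : closedb C -> ultrafilter S p ->
  (forall A, subS A -> (forall q, C q -> q A) -> p A) -> C p.
Proof.
intros [C1 C2] Hp H. apply NNPP; intro N.
destruct (C2 p Hp N) as (A&pA&HA).
set (A' := fun z => A z /\ S z).
assert (pA' : p A') by (apply (uf_up p A A' Hp pA); [intros z Sz a; split; auto | intros z [_ s]; auto]).
assert (sA' : subS A') by (intros z [_ s]; auto).
assert (H1 : p (cmp A')).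
{ apply H. intros z [s _]; auto.
  intros q Cq. apply uf_cmp; auto. intro qA. apply (HA q (C1 q Cq)); auto.
  apply (uf_up q A' A (C1 q Cq) qA). intros z _ [a _]; auto. apply (uf_sub p A Hp pA). }
exact (uf_notboth p A' Hp pA' H1).
Qed.

Lemma compact_chain (Ch : (UF -> Prop) -> Prop) :
  (forall C, Ch C -> closedb C /\ exists p, C p) ->
  (forall C1 C2, Ch C1 -> Ch C2 -> (forall p, C1 p -> C2 p) \/ (forall p, C2 p -> C1 p)) ->
  (exists C, Ch C) -> exists p, forall C, Ch C -> C p.
Proof.
intros HC Htot [C0 HC0].
set (G := fun A => subS A /\ exists C, Ch C /\ forall q, C q -> q A).
destruct (uf_lemma G) as (p&Hp&HGp).
- intros A [h _]; auto.
- apply fip_directed.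
  + exists S. split. intros z h; auto. exists C0. split; auto.
    intros q Cq. apply uf_S. apply (proj1 (proj1 (HC C0 HC0))); auto.
  + intros E [SE (C&ChC&HCE)]. destruct (HC C ChC) as [[Cu _] [q Cq]].
    apply (uf_ne q); [apply Cu; auto | apply HCE; auto].
  + intros E1 E2 [S1 (C1&Ch1&H1)] [S2 (C2&Ch2&H2)].
    exists (fun z => E1 z /\ E2 z). split; auto. split.
    * intros z [a _]; auto.
    * destruct (Htot C1 C2 Ch1 Ch2) as [h|h].
      -- exists C1. split; auto. intros q Cq.
         apply uf_and; [apply (proj1 (proj1 (HC C1 Ch1))); auto | apply H1; auto | apply H2; auto].
      -- exists C2. split; auto. intros q Cq.
         apply uf_and; [apply (proj1 (proj1 (HC C2 Ch2))); auto | apply H1; auto | apply H2; auto].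
- exists p. intros C ChC. apply closed_char; auto. apply (HC C ChC).
  intros A SA HA. apply HGp. split; auto. exists C; auto.
Qed.

Lemma min_closed (Q : (UF -> Prop) -> Prop) (C0 : UF -> Prop) :
  (forall Ch : (UF -> Prop) -> Prop, (forall C, Ch C -> Q C) -> Q (fun p => forall C, Ch C -> C p)) ->
  closedb C0 -> (exists p, C0 p) -> Q C0 ->
  exists L, closedb L /\ (exists p, L p) /\ Q L /\ (forall p, L p -> C0 p) /\
    forall L', closedb L' -> (exists p, L' p) -> Q L' -> (forall p, L' p -> L p) ->
      forall p, L p -> L' p.
Proof.
intros QI Cl0 Ne0 Q0.
set (Pc := fun C : UF -> Prop => closedb C /\ (exists p, C p) /\ Q C /\ forall p, C p -> C0 p).
assert (P0 : Pc C0) by (split; [|split; [|split]]; auto).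
destruct (zorn_pre {C | Pc C} (exist _ C0 P0)
   (fun a b => forall p, proj1_sig b p -> proj1_sig a p)) as [[L PL] HL].
- intros t p h; auto.
- intros r s t h1 h2 p h; auto.
- intros Ch HCh. destruct (classic (exists a, Ch a)) as [[a0 Ha0]|NE].
  + set (I := fun p => forall a, Ch a -> proj1_sig a p).
    assert (PI : Pc I).
    { split; [|split; [|split]].
      - split.
        + intros p Ip. apply (proj1 (proj1 (proj2_sig a0))). apply Ip; auto.
        + intros p Hp Np. apply not_all_ex_not in Np. destruct Np as [a Na].
          apply imply_to_and in Na. destruct Na as [Cha Na].
          destruct (proj2 (proj1 (proj2_sig a)) p Hp Na) as (A&pA&HA).
          exists A. split; auto. intros q Hq qA Iq. apply (HA q Hq qA). apply Iq; auto.
      - destruct (compact_chain (fun C => exists a, Ch a /\ C = proj1_sig a)) as [p Hp].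
        + intros C (a&Cha&->). split. apply (proj2_sig a). apply (proj2_sig a).
        + intros C1 C2 (a&Cha&->) (b&Chb&->). destruct (HCh a b Cha Chb); auto.
        + exists (proj1_sig a0); eauto.
        + exists p. intros a Cha. apply Hp. eauto.
      - assert (E : I = fun p => forall C, (exists a, Ch a /\ C = proj1_sig a) -> C p).
        { apply functional_extensionality; intro p. apply propositional_extensionality.
          split. intros h C (a&Cha&->); auto. intros h a Cha; apply h; eauto. }
        rewrite E. apply QI. intros C (a&Cha&->). apply (proj2_sig a).
      - intros p Ip. apply (proj2 (proj2 (proj2 (proj2_sig a0)))). apply Ip; auto. }
    exists (exist _ I PI). intros s Chs p Ip. apply Ip; auto.
  + exists (exist _ C0 P0). intros s Chs. exfalso; eauto.
- exists L. destruct PL as (PL1&PL2&PL3&PL4). split; [|split; [|split; [|split]]]; auto.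
  intros L' Cl' Ne' Q' Sub'.
  assert (P' : Pc L').
  { split; [|split; [|split]]; auto. }
  exact (HL (exist _ L' P') Sub').
Qed.

Lemma image_closed M e : closedb M -> ultrafilter S e ->
  closedb (fun p => exists q, M q /\ p = bplus S q e).
Proof.
intros HM He. split.
- intros p (q&Mq&->). apply bplus_uf; auto. apply (proj1 HM); auto.
- intros p Hp N. apply NNPP; intro N2.
  assert (H : forall A, p A -> exists q, M q /\ bplus S q e A).
  { intros A pA. apply NNPP; intro N3. apply N2. exists A. split; auto.
    intros q Hq qA (q'&Mq'&->). apply N3. eauto. }
  set (At := fun A s => S s /\ e (shift S s A)).
  set (G := fun E => exists A B, p A /\ (forall q, M q -> q B) /\ subS B /\
                     E = fun s => At A s /\ B s).
  destruct (uf_lemma G) as (q&Hq&HGq).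
  + intros E (A&B&_&_&SB&->). intros z [_ b]; auto.
  + apply fip_directed.
    * exists (fun s => At S s /\ S s). exists S, S. split. apply uf_S; auto.
      split. intros q Mq; apply uf_S, (proj1 HM); auto. split; auto. intros z h; auto.
    * intros E (A&B&pA&HB&SB&->). destruct (H A pA) as (q&Mq&[_ qA]).
      assert (Hq : ultrafilter S q) by (apply (proj1 HM); auto).
      apply (uf_ne q); auto. apply uf_and; auto. apply HB; auto.
    * intros E1 E2 (A1&B1&pA1&HB1&SB1&->) (A2&B2&pA2&HB2&SB2&->).
      exists (fun s => At (fun z => A1 z /\ A2 z) s /\ (B1 s /\ B2 s)). split.
      -- exists (fun z => A1 z /\ A2 z), (fun z => B1 z /\ B2 z). split; [|split; [|split]]; auto.
         apply uf_and; auto. intros q Mq. apply uf_and; [apply (proj1 HM); auto | apply HB1; auto | apply HB2; auto].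
         intros z [b _]; auto.
      -- intros s [[Ss es] [b1 b2]]. unfold At. split; split; auto; split; auto.
         ++ apply (uf_up e _ _ He es). intros z Sz [_ [a _]]; split; auto. intros z [a _]; auto.
         ++ apply (uf_up e _ _ He es). intros z Sz [_ [_ a]]; split; auto. intros z [a _]; auto.
  + apply N. exists q. split.
    * apply closed_char; auto. intros B SB HB.
      apply (uf_up q (fun s => At S s /\ B s)); auto.
      -- apply HGq. exists S, B. split; [apply uf_S; auto|]. split; auto.
      -- intros z _ [_ b]; auto.
    * apply uf_eq; auto. apply bplus_uf; auto.
      intros A pA. split. apply (uf_sub p A Hp pA).
      apply (uf_up q (fun s => At A s /\ S s)); auto.
      -- apply HGq. exists A, S. split; auto. split. intros q' Mq'; apply uf_S, (proj1 HM); auto.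
         split; auto. intros z h; auto.
      -- intros z _ [a _]; exact a.
      -- intros z [s _]; auto.
Qed.

Hypothesis Hdense : forall a b, 0 <= a -> a < b -> exists s, S s /\ a < s /\ s < b.

Local Notation OP := (in_Oplus S).
Definition leftideal (C : UF -> Prop) := forall u q, OP u -> C q -> C (bplus S u q).
Definition ML (L : UF -> Prop) := (forall p, L p -> OP p) /\ (exists p, L p) /\ leftideal L /\
  forall w q, L w -> L q -> exists u, OP u /\ q = bplus S u w.

Lemma OP_uf p : OP p -> ultrafilter S p.
Proof. intros [h _]; exact h. Qed.

Lemma OP_closed : closedb OP.
Proof.
split. apply OP_uf.
intros p Hp N. apply NNPP; intro N2. apply N. split; auto.
intros eps He. apply NNPP; intro N3. apply N2.
exists (cmp (fun x => S x /\ 0 < x /\ x < eps)). split.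
- apply uf_cmp; auto. intros z [a _]; auto.
- intros q Hq qA [_ H]. apply (uf_notboth q _ Hq (H eps He) qA).
Qed.

Lemma OP_ne : exists p, OP p.
Proof.
destruct (uf_lemma (fun A => exists eps, 0 < eps /\ A = fun x => S x /\ 0 < x /\ x < eps)) as (p&Hp&H).
- intros A (eps&_&->) z [a _]; auto.
- apply fip_directed.
  + exists (fun x => S x /\ 0 < x /\ x < 1). exists 1; split; auto; lra.
  + intros E (eps&He&->). destruct (Hdense 0 eps) as (s&Ss&h1&h2); try lra. exists s; auto.
  + intros E1 E2 (e1&H1&->) (e2&H2&->). exists (fun x => S x /\ 0 < x /\ x < Rmin e1 e2).
    split. exists (Rmin e1 e2). split; auto. apply Rmin_glb_lt; auto.
    intros z (Sz&a&b). assert (Rmin e1 e2 <= e1) by apply Rmin_l. assert (Rmin e1 e2 <= e2) by apply Rmin_r.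
    split; split; auto; split; lra.
- exists p. split; auto. intros eps He. apply H. exists eps; auto.
Qed.

Lemma closed_inter C1 C2 : closedb C1 -> closedb C2 -> closedb (fun p => C1 p /\ C2 p).
Proof.
intros [a1 b1] [a2 b2]. split.
- intros p [h _]; auto.
- intros p Hp N. destruct (classic (C1 p)) as [c1|c1].
  + assert (c2 : ~ C2 p) by tauto. destruct (b2 p Hp c2) as (A&pA&HA).
    exists A; split; auto. intros q Hq qA [_ h]; apply (HA q Hq qA h).
  + destruct (b1 p Hp c1) as (A&pA&HA).
    exists A; split; auto. intros q Hq qA [h _]; apply (HA q Hq qA h).
Qed.

Lemma ML_exists_in C0 : closedb C0 -> (exists p, C0 p) -> (forall p, C0 p -> OP p) -> leftideal C0 ->
  exists L, ML L /\ closedb L /\ forall p, L p -> C0 p.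
Proof.
intros Cl Ne Sub LI.
assert (QI : forall Ch : (UF -> Prop) -> Prop, (forall C, Ch C -> leftideal C) -> leftideal (fun p => forall C, Ch C -> C p)).
{ intros Ch HCh u q Hu Hq C ChC. apply (HCh C ChC); auto. apply Hq; auto. }
destruct (min_closed leftideal C0 QI Cl Ne LI) as (L&ClL&NeL&LIL&SubL&MinL).
{ exists L. split; [|split]; auto.
  split; [|split; [|split]]; auto.
  intros w q Lw Lq.
  set (L' := fun r => exists u, OP u /\ r = bplus S u w).
  assert (Hw : OP w) by auto.
  assert (E : L' = fun r => exists u, OP u /\ r = bplus S u w) by reflexivity.
  apply (MinL L'); auto.
  + apply image_closed. apply OP_closed. apply OP_uf; auto.
  + exists (bplus S w w). exists w; auto.
  + intros u r Hu (v&Hv&->). exists (bplus S u v). split. apply oplus_bplus; auto.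
    rewrite bplus_assoc; auto; apply OP_uf; auto.
  + intros r (v&Hv&->). apply LIL; auto. }
Qed.

Lemma OP_leftideal : leftideal OP.
Proof. intros u q Hu Hq. apply oplus_bplus; auto. Qed.

Lemma ML_exists : exists L, ML L.
Proof.
destruct (ML_exists_in OP) as (L&H&_); eauto. apply OP_closed. apply OP_ne. apply OP_leftideal.
Qed.

Lemma ML_K L p : ML L -> L p -> in_K S p.
Proof.
intros (H1&H2&H3&H4) Lp. split. auto.
intros I (I1&(r&Ir)&I3).
assert (Hr : OP r) by auto.
assert (Lrp : L (bplus S r p)) by (apply H3; auto).
destruct (H4 _ _ Lrp Lp) as (u&Hu&->).
apply (I3 u); auto. apply (I3 p r); auto.
Qed.

Lemma ML_right L v : ML L -> OP v -> ML (fun r => exists l, L l /\ r = bplus S l v).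
Proof.
intros (H1&(p&Lp)&H3&H4) Hv. split; [|split; [|split]].
- intros r (l&Ll&->). apply oplus_bplus; auto.
- exists (bplus S p v); eauto.
- intros u r Hu (l&Ll&->). exists (bplus S u l). split. apply H3; auto.
  rewrite bplus_assoc; auto; apply OP_uf; auto.
- intros w q (l1&L1&->) (l2&L2&->). destruct (H4 l1 l2 L1 L2) as (u&Hu&->).
  exists u. split; auto. rewrite bplus_assoc; auto; apply OP_uf; auto.
Qed.

Lemma K_ML p : in_K S p -> exists L, ML L /\ L p.
Proof.
intros [Hp HK].
apply (HK (fun q => exists L, ML L /\ L q)).
split; [|split].
- intros q (L&(H1&_)&Lq); auto.
- destruct ML_exists as [L HL]. destruct (proj1 (proj2 HL)) as [q Lq]. eauto.
- intros q r Hq (L&HL&Lr). split.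
  + exists L. split; auto. apply (proj1 (proj2 (proj2 HL))); auto.
  + exists (fun x => exists l, L l /\ x = bplus S l q). split. apply ML_right; auto. eauto.
Qed.

Lemma ellis N : closedb N -> (exists p, N p) -> (forall p, N p -> OP p) ->
  (forall p q, N p -> N q -> N (bplus S p q)) -> exists e, N e /\ bplus S e e = e.
Proof.
intros Cl Ne Sub SG.
assert (QI : forall Ch : (UF -> Prop) -> Prop, (forall C, Ch C -> (forall p q, C p -> C q -> C (bplus S p q))) -> 
   forall p q, (forall C, Ch C -> C p) -> (forall C, Ch C -> C q) -> forall C, Ch C -> C (bplus S p q)).
{ intros Ch HCh p q Hp Hq C ChC. apply (HCh C ChC); [apply Hp | apply Hq]; auto. }
destruct (min_closed (fun C => forall p q, C p -> C q -> C (bplus S p q)) N QI Cl Ne SG) as (M&ClM&(e&Me)&SGM&SubM&MinM).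
{ assert (He : ultrafilter S e) by (apply (proj1 ClM); auto).
  assert (Muf : forall q, M q -> ultrafilter S q) by exact (proj1 ClM).
  assert (E1 : exists q, M q /\ e = bplus S q e).
  { apply (MinM (fun r => exists q, M q /\ r = bplus S q e)); auto.
    - apply image_closed; auto.
    - exists (bplus S e e); eauto.
    - intros p1 p2 (q1&M1&->) (q2&M2&->). exists (bplus S (bplus S q1 e) q2). split. auto.
      rewrite (bplus_assoc (bplus S q1 e) q2 e); auto.
    - intros r (q&Mq&->). auto. }
  destruct E1 as (q0&Mq0&Eq0).
  assert (E2 : M e /\ (ultrafilter S e /\ bplus S e e = e)).
  { apply (MinM (fun r => M r /\ (ultrafilter S r /\ bplus S r e = e))); auto.
    - apply closed_inter; auto. split.
      + intros r [h _]; auto.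
      + intros r Hr N1.
        assert (N2 : exists A, bplus S r e A /\ ~ e A).
        { apply NNPP; intro N3. apply N1. split; auto. apply uf_eq. apply bplus_uf; auto. auto.
          intros A h. apply NNPP; intro N4. apply N3; eauto. }
        destruct N2 as (A&[SA rA]&NA).
        exists (fun x => S x /\ e (shift S x A)). split; auto.
        intros r' Hr' r'A [_ E]. apply NA. rewrite <- E. split; auto.
    - exists q0; auto.
    - intros p1 p2 [M1 [U1 E1]] [M2 [U2 E2]]. split; auto. split. apply bplus_uf; auto.
      rewrite bplus_assoc; auto. rewrite E2; auto.
    - intros r [h _]; auto. }
  exists e. split; auto. apply E2. }
Qed.

Lemma bS_compact (Good : (R -> Prop) -> Prop) :
  (forall q, ultrafilter S q -> exists A, Good A /\ subS A /\ q A) ->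
  exists l, (forall A, In A l -> Good A /\ subS A) /\ forall z, S z -> exists A, In A l /\ A z.
Proof.
intros H. apply NNPP; intro N.
set (G := fun C => exists A, Good A /\ subS A /\ C = cmp A).
destruct (uf_lemma G) as (q&Hq&HGq).
- intros C (A&_&_&->) z [s _]; auto.
- intros l Hl. apply NNPP; intro N2. apply N.
  assert (K : exists la, (forall A, In A la -> Good A /\ subS A) /\
             forall C, In C l -> exists A, In A la /\ C = cmp A).
  { clear N2. induction l as [|C l IH].
    - exists nil. split. intros A []. intros C [].
    - destruct IH as (la&H1&H2). intros C' HC'; apply Hl; simpl; auto.
      destruct (Hl C (or_introl eq_refl)) as (A&GA&SA&->).
      exists (A :: la). split.
      + intros B [<-|HB]; auto.
      + intros C' [<-|HC']. exists A; simpl; auto.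
        destruct (H2 C' HC') as (B&HB&->). exists B; simpl; auto. }
  destruct K as (la&H1&H2). exists la. split; auto.
  intros z Sz. apply NNPP; intro N3. apply N2. exists z. split; auto.
  intros C HC. destruct (H2 C HC) as (A&HA&->). split; auto.
  intro a. apply N3. eauto.
- destruct (H q Hq) as (A&GA&SA&qA).
  apply (uf_notboth q A Hq qA). apply HGq. exists A; auto.
Qed.

Definition UFs := {p : UF | ultrafilter S p}.
Definition XX := option UFs.
Definition prin (s : R) : UF := fun A => subS A /\ A s.
Definition trn (s : R) (q : UF) : UF := fun A => subS A /\ q (shift S s A).

Lemma prin_uf s : S s -> ultrafilter S (prin s).
Proof.
intros Ss. unfold prin. split; [|split; [|split; [|split; [|split]]]].
- intros A [h _]; auto.
- split; auto. intros z h; auto.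
- intros [_ []].
- intros A C [h1 a] [h2 c]. split; auto. intros z [u _]; auto.
- intros A C [h1 a] h2 h3. split; auto.
- intros A h. destruct (classic (A s)); [left|right]; split; auto. intros z [u _]; auto.
Qed.

Lemma trn_bplus s q : S s -> ultrafilter S q -> trn s q = bplus S (prin s) q.
Proof.
intros Ss Hq. apply functional_extensionality; intro A. apply propositional_extensionality.
unfold trn, bplus, prin. split.
- intros [h1 h2]. split; auto. split. intros z [u _]; auto. split; auto.
- intros [h1 [_ [_ h2]]]. split; auto.
Qed.

Lemma trn_uf s q : S s -> ultrafilter S q -> ultrafilter S (trn s q).
Proof. intros Ss Hq. rewrite trn_bplus; auto. apply bplus_uf; auto. apply prin_uf; auto. Qed.

Definition fix_uf (P : UF) : XX :=
  match excluded_middle_informative (ultrafilter S P) with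
  | left H => Some (exist _ P H)
  | right _ => None
  end.

Lemma fix_uf_eq P (H : ultrafilter S P) : fix_uf P = Some (exist _ P H).
Proof.
unfold fix_uf. destruct (excluded_middle_informative (ultrafilter S P)) as [H'|N].
- rewrite (proof_irrelevance _ H H'). reflexivity.
- contradiction.
Qed.

Definition Tm (s : R) (o : XX) : XX :=
  match o with
  | None => fix_uf (prin s)
  | Some q => fix_uf (trn s (proj1_sig q))
  end.

Definition opX (V : XX -> Prop) : Prop :=
  forall q : UFs, V (Some q) -> exists A, proj1_sig q A /\ forall q' : UFs, proj1_sig q' A -> V (Some q').

Lemma Tm_None s (Ss : S s) : Tm s None = Some (exist _ (prin s) (prin_uf s Ss)).
Proof. apply fix_uf_eq. Qed.

Lemma Tm_Some s (Ss : S s) (q : UFs) :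
  Tm s (Some q) = Some (exist _ (trn s (proj1_sig q)) (trn_uf s _ Ss (proj2_sig q))).
Proof. apply fix_uf_eq. Qed.

Lemma opX_top : topology XX opX.
Proof.
split; [|split; [|split]].
- intros q _. exists S. split. apply uf_S, (proj2_sig q). auto.
- intros q [].
- intros U V HU HV q [u v]. destruct (HU q u) as (A&qA&HA). destruct (HV q v) as (C&qC&HC).
  exists (fun z => A z /\ C z). split. apply uf_and; auto. apply (proj2_sig q).
  intros q' h. split.
  + apply HA. apply (uf_up _ _ A (proj2_sig q') h). intros z _ [a _]; auto. apply (uf_sub _ _ (proj2_sig q) qA).
  + apply HC. apply (uf_up _ _ C (proj2_sig q') h). intros z _ [_ c]; auto. apply (uf_sub _ _ (proj2_sig q) qC).
- intros F HF q (U&FU&Uq). destruct (HF U FU q Uq) as (A&qA&HA).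
  exists A. split; auto. intros q' h. exists U; auto.
Qed.

Lemma opX_compact : compact XX opX.
Proof.
intros F HF Hcov.
destruct (Hcov None) as (U0&FU0&U0N).
set (Good := fun A => exists U, F U /\ forall q' : UFs, proj1_sig q' A -> U (Some q')).
destruct (bS_compact Good) as (l&H1&H2).
- intros q Hq. destruct (Hcov (Some (exist _ q Hq))) as (U&FU&Uq).
  destruct (HF U FU _ Uq) as (A&qA&HA). simpl in qA.
  exists (fun z => A z /\ S z). split; [|split].
  + exists U. split; auto. intros q' h. apply HA.
    apply (uf_up _ _ A (proj2_sig q') h). intros z _ [a _]; auto. apply (uf_sub _ _ Hq qA).
  + intros z [_ s]; auto.
  + apply (uf_up _ _ _ Hq qA). intros z Sz a; auto. intros z [_ s]; auto.
- assert (K : exists lu, (forall U, In U lu -> F U) /\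
     forall A, In A l -> exists U, In U lu /\ forall q' : UFs, proj1_sig q' A -> U (Some q')).
  { clear H2. induction l as [|A l IH].
    - exists nil. split. intros U []. intros A [].
    - destruct IH as (lu&K1&K2). intros B HB; apply H1; simpl; auto.
      destruct (H1 A (or_introl eq_refl)) as [(U&FU&HU) _].
      exists (U :: lu). split.
      + intros V [<-|HV]; auto.
      + intros B [<-|HB]. exists U; simpl; auto.
        destruct (K2 B HB) as (V&HV&HV'). exists V; simpl; auto. }
  destruct K as (lu&K1&K2).
  exists (U0 :: lu). split.
  + intros U [<-|HU]; auto.
  + intros [q|].
    * destruct (uf_list (proj1_sig q) l (fun A => A) (proj2_sig q)) as (A&HA&qA).
      -- intros A HA. apply (H1 A HA).
      -- apply (uf_up _ S _ (proj2_sig q) (uf_S _ (proj2_sig q))).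
         intros z Sz _. apply H2; auto. intros z (A&HA&Az). apply (H1 A HA); auto.
      -- destruct (K2 A HA) as (U&HU&HU'). exists U. split. simpl; auto. apply HU'; auto.
    * exists U0. simpl; auto.
Qed.

Lemma opX_hausdorff : hausdorff XX opX.
Proof.
intros [p|] [q|] Hne.
- assert (N : exists A, proj1_sig p A /\ ~ proj1_sig q A).
  { apply NNPP; intro N. apply Hne. f_equal.
    destruct p as [p Hp]; destruct q as [q Hq]. simpl in N.
    assert (E : p = q).
    { apply uf_eq; auto. intros A h. apply NNPP; intro N2. apply N; eauto. }
    subst q. f_equal. apply proof_irrelevance. }
  destruct N as (A&pA&NqA).
  assert (SA : subS A) by (apply (uf_sub _ _ (proj2_sig p) pA)).
  exists (fun o => match o with Some r => proj1_sig r A | None => False end),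
         (fun o => match o with Some r => proj1_sig r (cmp A) | None => False end).
  split; [|split; [|split; [|split]]].
  + intros r h. exists A. split; auto.
  + intros r h. exists (cmp A). split; auto.
  + exact pA.
  + apply uf_cmp; auto. apply (proj2_sig q).
  + intros [r|] [h1 h2]; auto. apply (uf_notboth _ _ (proj2_sig r) h1 h2).
- exists (fun o => match o with Some r => True | None => False end), (fun o => match o with Some r => False | None => True end).
  split; [|split; [|split; [|split]]]; auto.
  + intros r _. exists S. split. apply uf_S, (proj2_sig r). auto.
  + intros r [].
  + intros [r|] [h1 h2]; auto.
- exists (fun o => match o with Some r => False | None => True end), (fun o => match o with Some r => True | None => False end).
  split; [|split; [|split; [|split]]]; auto.
  + intros r [].
  + intros r _. exists S. split. apply uf_S, (proj2_sig r). auto.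
  + intros [r|] [h1 h2]; auto.
- exfalso; auto.
Qed.

Lemma Tm_cont s : S s -> continuous XX opX (Tm s).
Proof.
intros Ss V HV q Vq. rewrite Tm_Some with (Ss := Ss) in Vq.
destruct (HV _ Vq) as (A&[SA qA]&HA). simpl in qA.
exists (shift S s A). split; auto.
intros q' h. rewrite Tm_Some with (Ss := Ss). apply HA. simpl. split; auto.
Qed.

Lemma Tm_comp s t : S s -> S t -> forall o, Tm s (Tm t o) = Tm (s + t) o.
Proof.
intros Ss St [q|].
- rewrite (Tm_Some t St). unfold Tm; simpl. f_equal.
  apply functional_extensionality; intro A. apply propositional_extensionality.
  unfold trn. split.
  + intros [h1 [_ h2]]. split; auto.
    apply (uf_up _ _ _ (proj2_sig q) h2).
    * intros z Sz [_ [_ a]]. split; auto. unfold shift in *. rewrite Rplus_assoc; auto.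
    * intros z [a _]; auto.
  + intros [h1 h2]. split; auto. split. intros z [a _]; auto.
    apply (uf_up _ _ _ (proj2_sig q) h2).
    * intros z Sz [_ a]. split; auto. split; auto. rewrite <- Rplus_assoc; auto.
    * intros z [a _]; auto.
- rewrite (Tm_None t St). unfold Tm; simpl. f_equal.
  apply functional_extensionality; intro A. apply propositional_extensionality.
  unfold trn, prin. split.
  + intros [h1 [_ [_ h2]]]. split; auto.
  + intros [h1 h2]. split; auto. split. intros z [a _]; auto. split; auto.
Qed.

Lemma XX_dyn : dynamical_system S XX opX Tm.
Proof.
split; [apply opX_top|split; [apply opX_compact|split; [apply opX_hausdorff|split]]].
- apply Tm_cont.
- intros s t Ss St x. apply Tm_comp; auto.
Qed.

Lemma synd_mono D D' : syndetic_near_zero S D -> (forall s, D s -> D' s) -> syndetic_near_zero S D'.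
Proof.
intros H Hs eps He. destruct (H eps He) as (F&delta&h1&h2&h3&h4).
exists F, delta. split; [|split; [|split]]; auto.
intros s Ss a b. destruct (h4 s Ss a b) as (t&Ht&[s1 s2]). exists t. split; auto. split; auto.
Qed.

Lemma ML_synd L p C : ML L -> L p -> p C ->
  syndetic_near_zero S (fun s => S s /\ p (shift S s C)).
Proof.
intros HL Lp pC. destruct HL as (H1&H2&H3&H4).
assert (Hp : ultrafilter S p) by (apply OP_uf; auto).
set (D := fun s => S s /\ p (shift S s C)).
apply NNPP; intro N.
apply not_all_ex_not in N. destruct N as [eps N].
apply imply_to_and in N. destruct N as [He N].
destruct (Hdense 0 eps) as (t0&St0&t01&t02); try lra.
assert (N' : forall F delta, (forall t, In t F -> S t /\ 0 < t /\ t < eps) -> 0 < delta ->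
   exists s, S s /\ 0 < s /\ s < delta /\ forall t, In t F -> ~ D (t + s)).
{ intros F delta HF Hd. apply NNPP; intro N2. apply N.
  exists (t0 :: F), delta. split; [|split; [|split]]; auto.
  - discriminate.
  - intros t [<-|Ht]; auto.
  - intros s Ss a b. apply NNPP; intro N3. apply N2. exists s. split; [|split; [|split]]; auto.
    intros t Ht Dt. apply N3. exists t. split. simpl; auto. split; auto. }
set (G := fun E => exists F delta, (forall t, In t F -> S t /\ 0 < t /\ t < eps) /\ 0 < delta /\
            E = fun s => S s /\ 0 < s /\ s < delta /\ forall t, In t F -> ~ D (t + s)).
destruct (uf_lemma G) as (q&Hq&HGq).
- intros E (F&delta&_&_&->) z [s _]; auto.
- apply fip_directed.
  + exists (fun s => S s /\ 0 < s /\ s < 1 /\ forall t, In t nil -> ~ D (t + s)).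
    exists nil, 1. split; [|split]; auto. intros t []. lra.
  + intros E (F&delta&HF&Hd&->). destruct (N' F delta HF Hd) as (s&h). exists s. split; auto. apply h.
  + intros E1 E2 (F1&d1&HF1&Hd1&->) (F2&d2&HF2&Hd2&->).
    exists (fun s => S s /\ 0 < s /\ s < Rmin d1 d2 /\ forall t, In t (F1 ++ F2) -> ~ D (t + s)).
    split.
    * exists (F1 ++ F2), (Rmin d1 d2). split; [|split]; auto.
      intros t Ht. apply in_app_or in Ht. destruct Ht; auto.
      apply Rmin_glb_lt; auto.
    * intros z (Sz&a&b&c). assert (Rmin d1 d2 <= d1) by apply Rmin_l. assert (Rmin d1 d2 <= d2) by apply Rmin_r.
      split; (split; [auto|split; [auto|split; [lra|]]]); intros t Ht; apply c, in_or_app; auto.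
- assert (Oq : OP q).
  { split; auto. intros e' He'. apply (uf_up _ (fun s => S s /\ 0 < s /\ s < e' /\ forall t, In t nil -> ~ D (t + s))); auto.
    apply HGq. exists nil, e'. split; [|split]; auto. intros t [].
    intros z _ (a&b&c&_); auto. intros z [a _]; auto. }
  assert (Hcq : forall t, S t -> 0 < t -> t < eps -> q (shift S t (cmp D))).
  { intros t St a b.
    apply (uf_up _ (fun s => S s /\ 0 < s /\ s < 1 /\ forall t', In t' (t :: nil) -> ~ D (t' + s))); auto.
    - apply HGq. exists (t :: nil), 1. split; [|split]; auto. intros t' [<-|[]]; auto. lra.
    - intros z Sz (_&_&_&c). split; auto. split. apply Hadd; auto. apply c; simpl; auto.
    - intros z [a' _]; auto. }
  assert (Lqp : L (bplus S q p)) by (apply H3; auto).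
  destruct (H4 _ _ Lqp Lp) as (u&Hu&Eu).
  assert (Huf : ultrafilter S u) by (apply OP_uf; auto).
  rewrite <- bplus_assoc in Eu; auto.
  assert (Huq : ultrafilter S (bplus S u q)) by (apply bplus_uf; auto).
  assert (c1 : bplus S u q D).
  { rewrite Eu in pC. destruct pC as [_ h]. apply (uf_up _ _ _ Huq h). intros z _ h'; exact h'.
    intros z [a _]; auto. }
  assert (c2 : bplus S u q (cmp D)).
  { split. intros z [a _]; auto. destruct Hu as [_ Hu].
    apply (uf_up _ _ _ Huf (Hu eps He)).
    - intros z Sz (_&a&b). split; auto.
    - intros z [a _]; auto. }
  exact (uf_notboth _ _ Huq c1 c2).
Qed.

Lemma forward B : subS B -> central_near_zero S B ->
  exists (X : Type) (op : (X -> Prop) -> Prop) (T : R -> X -> X),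
    dynamical_system S X op T /\
    exists (x y : X) (U : X -> Prop),
      nbhd X op y U /\
      proximal_near_zero S X op T x y /\
      unif_rec_near_zero S X op T y /\
      (forall s, B s <-> (S s /\ U (T s x))).
Proof.
intros SB (p&Kp&Ip&pB).
destruct (K_ML p Kp) as (L&HL&Lp).
assert (Hp : ultrafilter S p) by (apply OP_uf; apply (proj1 HL); auto).
assert (Ep : bplus S p p = p) by (apply uf_eq; auto; [apply bplus_uf; auto | intros A h; apply Ip; auto]).
set (pp := exist (fun q => ultrafilter S q) p Hp).
exists XX, opX, Tm. split. apply XX_dyn.
exists None, (Some pp), (fun o => match o with Some r => proj1_sig r B | None => False end).
split; [|split; [|split]].
- exists (fun o => match o with Some r => proj1_sig r B | None => False end). split; [|split]; auto.
  intros r h. exists B; auto.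
- intros W (W0&PW0&DW0&SW0) eps He.
  destruct (PW0 (Some pp) (Some pp) (DW0 _)) as (A'&C'&OA&OC&Ap&Cp&HAC).
  destruct (OA pp Ap) as (A&pA&HA). destruct (OC pp Cp) as (C&pC&HC). simpl in pA, pC.
  assert (pC2 : bplus S p p C) by (rewrite Ep; auto).
  destruct pC2 as [SC pC2].
  destruct (uf_ne p (fun s => (A s /\ S s) /\ (S s /\ p (shift S s C)) /\ (S s /\ 0 < s /\ s < eps)) Hp) as (s&Ss&(a&_)&(_&ps)&(_&s1&s2)).
  { apply uf_and; auto. apply (uf_up _ _ _ Hp pA). auto. intros z [_ h]; auto.
    apply uf_and; auto. destruct Kp as [[_ Op] _]. apply Op; auto. }
  exists s. split; [|split; [|split]]; auto.
  apply SW0. apply HAC.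
  + rewrite (Tm_None s Ss). apply (HA (exist _ (prin s) (prin_uf s Ss))). simpl. split; auto.
    apply (uf_sub _ _ Hp pA).
  + rewrite (Tm_Some s Ss). apply (HC (exist _ _ _)). simpl. split; auto.
- intros W (V&OV&Vp&VW).
  destruct (OV pp Vp) as (C&pC&HC). simpl in pC.
  apply (synd_mono (fun s => S s /\ p (shift S s C))).
  + apply (ML_synd L); auto.
  + intros s [Ss h]. split; auto. apply VW. rewrite (Tm_Some s Ss). apply HC. simpl. split; auto.
    apply (uf_sub _ _ Hp pC).
- intros s. split.
  + intros b. split; auto. rewrite (Tm_None s (SB s b)). simpl. split; auto.
  + intros [Ss h]. rewrite (Tm_None s Ss) in h. simpl in h. apply h.
Qed.

Section DYN.
Variable X : Type.
Variable op : (X -> Prop) -> Prop.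
Variable T : R -> X -> X.
Hypothesis Htop : topology X op.
Hypothesis Hcpt : compact X op.
Hypothesis Hhd : hausdorff X op.
Hypothesis Hcont : forall s, S s -> continuous X op (T s).
Hypothesis Hlaw : forall s t, S s -> S t -> forall x, T s (T t x) = T (s + t) x.

Definition lim (q : UF) (z w : X) := forall V, op V -> V w -> q (fun s => S s /\ V (T s z)).
Definition cl (V : X -> Prop) (a : X) := forall O, op O -> O a -> exists b, O b /\ V b.

Lemma op_whole : op (fun _ => True).
Proof. apply Htop. Qed.

Lemma op_inter U V : op U -> op V -> op (fun x => U x /\ V x).
Proof. apply Htop. Qed.

Lemma lim_exists q z : ultrafilter S q -> exists w, lim q z w.
Proof.
intros Hq. apply NNPP; intro N.
assert (N' : forall w, exists V, op V /\ V w /\ ~ q (fun s => S s /\ V (T s z))).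
{ intros w. apply NNPP; intro N2. apply N. exists w. intros V OV Vw. apply NNPP; intro N3. apply N2. eauto. }
destruct (Hcpt (fun V => op V /\ ~ q (fun s => S s /\ V (T s z)))) as (l&Hl&Hcov).
- intros U [h _]; auto.
- intros w. destruct (N' w) as (V&h1&h2&h3). exists V; auto.
- destruct (uf_list q l (fun V s => S s /\ V (T s z)) Hq) as (V&HV&qV).
  + intros V _ s [h _]; auto.
  + apply (uf_up _ S _ Hq (uf_S _ Hq)).
    * intros s Ss _. destruct (Hcov (T s z)) as (V&HV&Vs). exists V; auto.
    * intros s (V&_&[h _]); auto.
  + destruct (Hl V HV) as [_ h]. contradiction.
Qed.

Lemma lim_unique q z w1 w2 : ultrafilter S q -> lim q z w1 -> lim q z w2 -> w1 = w2.
Proof.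
intros Hq H1 H2. apply NNPP; intro N.
destruct (Hhd w1 w2 N) as (U&V&OU&OV&Uw&Vw&D).
destruct (uf_ne q _ Hq (uf_and q _ _ Hq (H1 U OU Uw) (H2 V OV Vw))) as (s&_&[_ a]&[_ b]).
exact (D _ (conj a b)).
Qed.

Lemma regular V w : op V -> V w -> exists V', op V' /\ V' w /\ forall a, cl V' a -> V a.
Proof.
intros OV Vw.
set (F := fun P => P = V \/ (op P /\ exists O, op O /\ O w /\ forall b, ~ (O b /\ P b))).
destruct (Hcpt F) as (l&Hl&Hcov).
- intros P [->|[h _]]; auto.
- intros a. destruct (classic (V a)) as [h|h].
  + exists V. split; auto. left; auto.
  + assert (ne : w <> a) by (intro e; subst; contradiction).
    destruct (Hhd w a ne) as (O&P&OO&OP'&Ow&Pa&D).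
    exists P. split; auto. right. split; auto. exists O. split; auto.
assert (K : exists O, op O /\ O w /\ forall P, In P l -> P = V \/ forall b, ~ (O b /\ P b)).
{ clear Hcov. induction l as [|P l IH].
  - exists (fun _ => True). split; [apply op_whole|]. split; [exact I|]. intros Q [].
  - destruct IH as (O&OO&Ow&HO). intros Q HQ; apply Hl; simpl; auto.
    destruct (Hl P (or_introl eq_refl)) as [->|[_ (O'&OO'&Ow'&D')]].
    + exists O. split; auto. split; auto. intros Q [<-|HQ]; auto.
    + exists (fun b => O b /\ O' b). split. apply op_inter; auto. split; auto.
      intros Q [<-|HQ].
      * right. intros b [[_ c] d]. exact (D' b (conj c d)).
      * destruct (HO Q HQ) as [h|h]; auto. right. intros b [[c _] d]. exact (h b (conj c d)). }
destruct K as (O&OO&Ow&HO). exists O. split; auto. split; auto.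
intros a Ha. apply NNPP; intro Na.
destruct (Hcov a) as (P&HP&Pa).
destruct (HO P HP) as [->|D]. contradiction.
destruct (Hl P HP) as [->|[OP' _]]. contradiction.
destruct (Ha P OP' Pa) as (b&Pb&Ob). exact (D b (conj Ob Pb)).
Qed.

Lemma lim_cl q z w V : ultrafilter S q -> lim q z w -> q (fun s => S s /\ V (T s z)) -> cl V w.
Proof.
intros Hq Hl HV O OO Ow.
destruct (uf_ne q _ Hq (uf_and q _ _ Hq (Hl O OO Ow) HV)) as (s&_&[_ a]&[_ b]).
exists (T s z); auto.
Qed.

Lemma lim_comp q r z w v : ultrafilter S q -> ultrafilter S r -> lim q z w -> lim r w v ->
  lim (bplus S r q) z v.
Proof.
intros Hq Hr H1 H2 V OV Vv. split. intros s [a _]; auto.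
apply (uf_up _ _ _ Hr (H2 V OV Vv)).
- intros s Ss [_ Vs].
  split; auto.
  apply (uf_up _ _ _ Hq (H1 (fun a => V (T s a)) (Hcont s Ss V OV) Vs)).
  + intros t St [_ h]. split; auto. split. apply Hadd; auto. rewrite <- Hlaw; auto.
  + intros t [a _]; auto.
- intros s [a _]; auto.
Qed.

Lemma cl_cont t V' z : S t -> cl (fun b => V' (T t b)) z -> cl V' (T t z).
Proof.
intros St H O OO Oz. destruct (H (fun b => O (T t b)) (Hcont t St O OO) Oz) as (b&h1&h2).
exists (T t b); auto.
Qed.

Lemma diag_whole : diag_nbhd X op (fun _ => True).
Proof.
exists (fun _ => True). split; [|split]; auto.
intros a b _. exists (fun _ => True), (fun _ => True). split; [apply op_whole|split; [apply op_whole|]]; auto.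
Qed.

Lemma diag_inter W1 W2 : diag_nbhd X op W1 -> diag_nbhd X op W2 -> diag_nbhd X op (fun z => W1 z /\ W2 z).
Proof.
intros (V1&P1&D1&S1) (V2&P2&D2&S2).
exists (fun z => V1 z /\ V2 z). split; [|split]; auto.
- intros a b [h1 h2]. destruct (P1 a b h1) as (A1&C1&OA1&OC1&a1&c1&H1).
  destruct (P2 a b h2) as (A2&C2&OA2&OC2&a2&c2&H2).
  exists (fun x => A1 x /\ A2 x), (fun x => C1 x /\ C2 x).
  split; [apply op_inter; auto|split; [apply op_inter; auto|]]. split; auto. split; auto.
  intros u v [] []. auto.
- intros z []; auto.
Qed.

Lemma backward x y U : nbhd X op y U -> proximal_near_zero S X op T x y ->
  unif_rec_near_zero S X op T y ->
  exists u, in_K S u /\ bplus S u u = u /\ lim u x y.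
Proof.
intros HU Hprox HUR.
set (G := fun E => exists W eps, diag_nbhd X op W /\ 0 < eps /\
           E = fun s => S s /\ 0 < s /\ s < eps /\ W (T s x, T s y)).
destruct (uf_lemma G) as (p&Hp&HGp).
{ intros E (W&eps&_&_&->) s [a _]; auto. }
{ apply fip_directed.
  - exists (fun s => S s /\ 0 < s /\ s < 1 /\ True). exists (fun _ => True), 1.
    split. apply diag_whole. split. lra. reflexivity.
  - intros E (W&eps&HW&He&->). destruct (Hprox W HW eps He) as (s&h). exists s. split; apply h.
  - intros E1 E2 (W1&e1&HW1&He1&->) (W2&e2&HW2&He2&->).
    exists (fun s => S s /\ 0 < s /\ s < Rmin e1 e2 /\ (fun z => W1 z /\ W2 z) (T s x, T s y)).
    split.
    + exists (fun z => W1 z /\ W2 z), (Rmin e1 e2). split. apply diag_inter; auto.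
      split; auto. apply Rmin_glb_lt; auto.
    + intros z (Sz&a&b&[c d]). assert (Rmin e1 e2 <= e1) by apply Rmin_l. assert (Rmin e1 e2 <= e2) by apply Rmin_r.
      split; (split; [auto|split; [auto|split; [lra|auto]]]). }
assert (Op : in_Oplus S p).
{ split; auto. intros e He. apply (uf_up _ (fun s => S s /\ 0 < s /\ s < e /\ True)); auto.
  - apply HGp. exists (fun _ => True), e. split. apply diag_whole. split; auto.
  - intros s _ (a&b&c&_); auto.
  - intros s [a _]; auto. }
destruct (lim_exists p x Hp) as (a&Ha).
destruct (lim_exists p y Hp) as (b&Hb).
assert (Eab : a = b).
{ apply NNPP; intro N.
  destruct (Hhd a b N) as (Va&Vb&OVa&OVb&Vaa&Vbb&Dab).
  destruct (regular Va a OVa Vaa) as (Va'&OVa'&Va'a&Ca).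
  destruct (regular Vb b OVb Vbb) as (Vb'&OVb'&Vb'b&Cb).
  set (W := fun uv : X * X => ~ (cl Va' (fst uv) /\ cl Vb' (snd uv))).
  assert (HW : diag_nbhd X op W).
  { exists W. split; [|split]; auto.
    - intros u v Huv. unfold W in Huv; simpl in Huv.
      apply not_and_or in Huv. destruct Huv as [h|h].
      + unfold cl in h. apply not_all_ex_not in h. destruct h as [O h].
        apply imply_to_and in h. destruct h as [OO h]. apply imply_to_and in h. destruct h as [Ou h].
        exists O, (fun _ => True). split; auto. split. apply op_whole. split; auto. split; auto.
        intros u' v' Ou' _ [c1 _]. simpl in c1. destruct (c1 O OO Ou') as (z&Oz&Vz). apply h; eauto.
      + unfold cl in h. apply not_all_ex_not in h. destruct h as [O h].
        apply imply_to_and in h. destruct h as [OO h]. apply imply_to_and in h. destruct h as [Ov h].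
        exists (fun _ => True), O. split. apply op_whole. split; auto. split; auto. split; auto.
        intros u' v' _ Ov' [_ c2]. simpl in c2. destruct (c2 O OO Ov') as (z&Oz&Vz). apply h; eauto.
    - intros z [c1 c2]. simpl in c1, c2. exact (Dab z (conj (Ca z c1) (Cb z c2))). }
  assert (E1 : p (fun s => S s /\ 0 < s /\ s < 1 /\ W (T s x, T s y))).
  { apply HGp. exists W, 1. split; auto. split; auto. lra. }
  destruct (uf_ne p _ Hp (uf_and p _ _ Hp E1 (uf_and p _ _ Hp (Ha Va' OVa' Va'a) (Hb Vb' OVb' Vb'b))))
    as (s&_&(_&_&_&Ws)&[_ h1]&[_ h2]).
  apply Ws. simpl. split.
  - intros O OO Os. exists (T s x); auto.
  - intros O OO Os. exists (T s y); auto. }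
subst b.
set (C0 := fun r => exists u, in_Oplus S u /\ r = bplus S u p).
destruct (ML_exists_in C0) as (L&HL&ClL&SubL).
{ apply image_closed; auto. apply OP_closed. }
{ exists (bplus S p p). exists p; auto. }
{ intros r (u&Hu&->). apply oplus_bplus; auto. }
{ intros u r Hu (v&Hv&->). exists (bplus S u v). split. apply oplus_bplus; auto.
  rewrite bplus_assoc; auto; apply OP_uf; auto. }
assert (HLxy : forall v, L v -> exists c, lim v x c /\ lim v y c).
{ intros v Lv. destruct (SubL v Lv) as (u&Hu&->).
  destruct (lim_exists u a (OP_uf u Hu)) as (c&Hc). exists c.
  split; [apply (lim_comp p u x a c) | apply (lim_comp p u y a c)]; auto; apply OP_uf; auto. }
destruct HL as (L1&(r&Lr)&L3&L4).
assert (Hr : ultrafilter S r) by (apply OP_uf; auto).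
destruct (lim_exists r y Hr) as (z&Hz).
set (G2 := fun E => exists V eps, op V /\ V y /\ 0 < eps /\
           E = fun s => S s /\ 0 < s /\ s < eps /\ V (T s z)).
destruct (uf_lemma G2) as (q&Hq&HGq).
{ intros E (V&eps&_&_&_&->) s [h _]; auto. }
{ apply fip_directed.
  - exists (fun s => S s /\ 0 < s /\ s < 1 /\ True). exists (fun _ => True), 1.
    split. apply op_whole. split; auto. split. lra. reflexivity.
  - intros E (V&eps&OV&Vy&He&->).
    destruct (regular V y OV Vy) as (V'&OV'&V'y&CV').
    destruct (HUR V' (ex_intro _ V' (conj OV' (conj V'y (fun a h => h)))) eps He) as (F&delta&_&HF&Hd&Hsyn).
    destruct (uf_list r F (fun t => shift S t (fun s => S s /\ V' (T s y))) Hr) as (t&Ht&rt).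
    + intros t _ s [h _]; auto.
      apply (uf_up _ _ _ Hr (proj2 (L1 r Lr) delta Hd)).
      * intros s Ss (_&s1&s2). apply Hsyn; auto.
      * intros s (t&_&[h _]); auto.
    + destruct (HF t Ht) as (St&t1&t2).
      assert (Hc : cl (fun b => V' (T t b)) z).
      { apply (lim_cl r y z); auto.
        apply (uf_up _ _ _ Hr rt).
        - intros s Ss [_ [_ h]]. split; auto. rewrite Hlaw; auto.
        - intros s [h _]; auto. }
      exists t. split; auto. split; auto. split; auto. split; auto.
      apply CV'. apply cl_cont; auto.
  - intros E1 E2 (V1&e1&O1&V1y&He1&->) (V2&e2&O2&V2y&He2&->).
    exists (fun s => S s /\ 0 < s /\ s < Rmin e1 e2 /\ (fun b => V1 b /\ V2 b) (T s z)).
    split.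
    + exists (fun b => V1 b /\ V2 b), (Rmin e1 e2). split. apply op_inter; auto.
      split; auto. split; auto. apply Rmin_glb_lt; auto.
    + intros s (Ss&a1&b1&[c d]). assert (Rmin e1 e2 <= e1) by apply Rmin_l. assert (Rmin e1 e2 <= e2) by apply Rmin_r.
      split; (split; [auto|split; [auto|split; [lra|auto]]]). }
assert (Oq : in_Oplus S q).
{ split; auto. intros e He. apply (uf_up _ (fun s => S s /\ 0 < s /\ s < e /\ True)); auto.
  - apply HGq. exists (fun _ => True), e. split. apply op_whole. split; auto.
  - intros s _ (a1&b1&c1&_); auto.
  - intros s [h _]; auto. }
assert (Hqz : lim q z y).
{ intros V OV Vy. apply (uf_up _ (fun s => S s /\ 0 < s /\ s < 1 /\ V (T s z))); auto.
  - apply HGq. exists V, 1. split; auto. split; auto. split; auto. lra.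
  - intros s Ss (_&_&_&h); split; auto.
  - intros s [h _]; auto. }
set (N := fun v => L v /\ (ultrafilter S v /\ lim v y y)).
destruct (ellis N) as (u&[Lu [Hu Huy]]&Eu).
{ apply closed_inter; auto. split.
  - intros v [h _]; auto.
  - intros v Hv Nv.
    assert (Nl : ~ lim v y y) by tauto.
    destruct (lim_exists v y Hv) as (w&Hw).
    assert (ne : w <> y) by (intro e; subst; contradiction).
    destruct (Hhd w y ne) as (Vw&Vy&OVw&OVy&Vww&Vyy&D).
    destruct (regular Vw w OVw Vww) as (Vw'&OVw'&Vw'w&Cw).
    exists (fun s => S s /\ Vw' (T s y)). split. apply Hw; auto.
    intros v' Hv' h [_ Hl'].
    assert (c : cl Vw' y) by (apply (lim_cl v' y y); auto).
    exact (D y (conj (Cw y c) Vyy)). }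
{ exists (bplus S q r). split. apply L3; auto. split. apply bplus_uf; auto.
  apply (lim_comp r q y z y); auto. }
{ intros v [h _]; auto. }
{ intros v1 v2 [M1 [U1 E1]] [M2 [U2 E2]]. split. apply L3; auto. split. apply bplus_uf; auto.
  apply (lim_comp v2 v1 y y y); auto. }
exists u. split; [|split]; auto.
- apply (ML_K L); auto. split; [|split; [|split]]; eauto.
- destruct (HLxy u Lu) as (c&H1&H2).
  rewrite (lim_unique u y y c Hu Huy H2). auto.
Qed.
End DYN.
End BS.

Theorem theorem2p11 (S : R -> Prop) (HS : dense_subsemigroup S)
  (B : R -> Prop) (HB : forall z, B z -> S z) :
  central_near_zero S B <->
  exists (X : Type) (op : (X -> Prop) -> Prop) (T : R -> X -> X),
    dynamical_system S X op T /\
    exists (x y : X) (U : X -> Prop),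
      nbhd X op y U /\
      proximal_near_zero S X op T x y /\
      unif_rec_near_zero S X op T y /\
      (forall s, B s <-> (S s /\ U (T s x))).
Proof.
destruct HS as (Hpos&Hadd&Hdense). split.
- intros Hc. exact (forward S Hadd Hdense B HB Hc).
- intros (X&op&T&(Htop&Hcpt&Hhd&Hcont&Hlaw)&x&y&U&HU&Hprox&HUR&HBU).
  destruct (backward S Hadd X op T Htop Hcpt Hhd Hcont Hlaw x y U HU Hprox HUR) as (u&Ku&Eu&Hl).
  exists u. split; [exact Ku|split].
  + rewrite Eu. intro A; tauto.
  + destruct HU as (V&OV&Vy&VU).
    assert (Hu : ultrafilter S u) by (destruct Ku as [[h _] _]; exact h).
    apply (uf_up S u _ B Hu (Hl V OV Vy)).
    * intros s Ss [_ h]. apply HBU. split; auto.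
    * exact HB.
Qed.
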